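(* In the setting described in the context, the elements $\exp(t_1),\dots,\exp(t_n)$ together with the elements $t^*(g\otimes g')=\exp\bigl(t(g\otimes g')\bigr)$, where $(g,g')$ ranges over pairs of elements of $\mathcal G(\overline{\mathbb{Q}\{\boldsymbol{X}\}})\setminus\{1\}$, freely generate a (free) abelian subgroup of the multiplicative group $\mathcal G(\overline{\mathbb{Q}[T]})$; that is, if $e_1,\dots,e_n,d_1,\dots,d_m\in\mathbb{Z}$ and $(g_1,g_1'),\dots,(g_m,g_m')$ are pairwise distinct pairs in $\mathcal G(\overline{\mathbb{Q}\{\boldsymbol{X}\}})\setminus\{1\}$ with $\exp(t_1)^{e_1}\cdots\exp(t_n)^{e_n}t^*(g_1\otimes g_1')^{d_1}\cdots t^*(g_m\otimes g_m')^{d_m}=1$, then all $e_i$ and $d_j$ are zero.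
   Context: Let $\boldsymbol{X}=\{X_1,\dots,X_n\}$ and let $\mathbb{Q}\{\boldsymbol{X}\}$ be the free non-associative algebra over $\mathbb{Q}$ on $\boldsymbol{X}$, made into a (non-associative) Hopf algebra by declaring each $X_i$ primitive ($\Delta X_i=X_i\otimes1+1\otimes X_i$, $\Delta$ multiplicative, counit $\epsilon$). Let $\overline{\mathbb{Q}\{\boldsymbol{X}\}}$ be its completion with respect to degree (non-associative formal power series), with the coproduct extended to the completed tensor product. $\mathcal G(H)$ denotes the set of group-like elements, i.e. $g$ with $\Delta(g)=g\otimes g$ and $\epsilon(g)=1$. Let $m(\boldsymbol{X})$ be the set of non-associative monomials in $\boldsymbol{X}$ of degree $\ge1$, and $T$ the set of formal symbols $\{t_1,\dots,t_n\}\sqcup\{t(m_1,m_2)\mid m_1,m_2\in m(\boldsymbol{X})\}$, graded by $|t_i|=1$, $|t(m_1,m_2)|=|m_1|+|m_2|$. $\mathbb{Q}[T]$ is the commutative associative polynomial algebra on $T$, a Hopf algebra with all elements of $T$ primitive, and $\overline{\mathbb{Q}[T]}$ its completion with respect to degree. Let $t$ be the linear map from $\mathbb{Q}\{\boldsymbol{X}\}\otimes\mathbb{Q}\{\boldsymbol{X}\}$ to the span of $T$ given by $t(m_1\otimes m_2)=t(m_1,m_2)$ for $m_1,m_2\in m(\boldsymbol{X})$ and $t(m_1\otimes1)=t(1\otimes m_2)=t(1\otimes1)=0$, extended to the degree completions. For $g,g'$ group-like, $t^*(g\otimes g')$ denotes $\exp(t(g\otimes g'))\in\overline{\mathbb{Q}[T]}$,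 where $\exp$ is the usual exponential series. *)

(* Defs.v *)
From HB Require Import structures.
From mathcomp Require Import all_boot all_algebra.
From mathcomp Require Import finmap multiset.

Set Implicit Arguments.
Unset Strict Implicit.
Unset Printing Implicit Defensive.

Import GRing.Theory.

(* Non-associative monomials of degree >= 1 in X_1..X_n (m(X)).        *)
(* The empty monomial 1 is represented by [None] in [option (nmono n)] *)
Inductive nmono (n : nat) : Type :=
| Leaf of 'I_n
| Node of nmono n & nmono n.

Arguments Leaf {n}.
Arguments Node {n}.

Section NmonoCount.
Variable n : nat.

Fixpoint enc_nmono (a : nmono n) : GenTree.tree nat :=
  match a with
  | Leaf i => GenTree.Leaf (nat_of_ord i)
  | Node a b => GenTree.Node 0 [:: enc_nmono a; enc_nmono b]
  end.

Fixpoint dec_nmono (t : GenTree.tree nat) : option (nmono n) :=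
  match t with
  | GenTree.Leaf k => omap Leaf (insub k)
  | GenTree.Node _ [:: ta; tb] =>
      match dec_nmono ta, dec_nmono tb with
      | Some a, Some b => Some (Node a b)
      | _, _ => None
      end
  | _ => None
  end.

Lemma enc_nmonoK : pcancel enc_nmono dec_nmono.
Proof.
elim=> [i|a IHa b IHb] /=; first by rewrite valK.
by rewrite IHa IHb.
Qed.

HB.instance Definition _ := Countable.copy (nmono n) (pcan_type enc_nmonoK).
End NmonoCount.

Fixpoint mdeg n (a : nmono n) : nat :=
  match a with Leaf _ => 1 | Node a b => mdeg a + mdeg b end.
Definition odeg n (u : option (nmono n)) : nat :=
  if u is Some a then mdeg a else 0.

Fixpoint monos_aux n (fuel k : nat) : seq (nmono n) :=
  match fuel with
  | 0 => [::]
  | f.+1 =>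
      if k == 1 then [seq Leaf i | i <- enum 'I_n]
      else flatten [seq [seq Node a b | a <- monos_aux n f j,
                                       b <- monos_aux n f (k - j)]
                   | j <- iota 1 k.-1]
  end.
Definition monos n k : seq (nmono n) := monos_aux n k k.
Definition omonos n k : seq (option (nmono n)) :=
  if k == 0 then [:: None] else [seq Some a | a <- monos n k].

(* Completion of Q{X}: non-associative formal power series, i.e.      *)
(* arbitrary coefficient functions on {1} u m(X).                      *)
Definition QX n := option (nmono n) -> rat.
Definition QX1 n : QX n := fun u => if u is None then 1%R else 0%R.
Arguments QX1 n : clear implicits.

(* completed tensor product Q{X} (x) Q{X} *)
Definition QXX n := (option (nmono n) * option (nmono n))%type -> rat.

(* all factorisations u = u1 * u2 in the (unital) magma of monomials *)
Definition msplits n (u : option (nmono n)) :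
    seq (option (nmono n) * option (nmono n)) :=
  match u with
  | None => [:: (None, None)]
  | Some (Leaf _) => [:: (None, u); (u, None)]
  | Some (Node a b) => [:: (None, u); (u, None); (Some a, Some b)]
  end.

(* multiplication of the (completed) tensor product algebra:
   (u1 (x) v1)(u2 (x) v2) = u1 u2 (x) v1 v2 *)
Definition tensmul n (F G : QXX n) : QXX n := fun uv =>
  (\sum_(p <- msplits uv.1) \sum_(q <- msplits uv.2)
     F (p.1, q.1) * G (p.2, q.2))%R.

(* coproduct of a monomial: multiplicative, X_i primitive *)
Fixpoint Delta_mono n (a : nmono n) : QXX n :=
  match a with
  | Leaf i => fun uv =>
      match uv with
      | (Some (Leaf j), None) => ((i == j)%:R)%R
      | (None, Some (Leaf j)) => ((i == j)%:R)%R
      | _ => 0%R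
      end
  | Node a b => tensmul (Delta_mono a) (Delta_mono b)
  end.

Definition Delta_omono n (w : option (nmono n)) : QXX n :=
  match w with
  | None => fun uv => if uv is (None, None) then 1%R else 0%R
  | Some a => Delta_mono a
  end.

(* coproduct extended to the completion: Delta(f) = sum_w f(w) Delta(w).
   Delta(w) is homogeneous of degree |w|, so only the w of degree
   |u|+|v| contribute to the coefficient of u (x) v. *)
Definition Delta n (f : QX n) : QXX n := fun uv =>
  (\sum_(w <- omonos n (odeg uv.1 + odeg uv.2)) f w * Delta_omono w uv)%R.

Definition counit n (f : QX n) : rat := f None.

Definition grouplike n (g : QX n) : Prop :=
  counit g = 1%R /\ forall u v, Delta g (u, v) = (g u * g v)%R.

Definition tens n (g g' : QX n) : QXX n := fun uv => (g uv.1 * g' uv.2)%R.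

(* The alphabet T = {t_1..t_n} u {t(m1,m2) | m1,m2 in m(X)} and the    *)
(* completion of the commutative polynomial algebra Q[T]: arbitrary    *)
(* coefficient functions on commutative monomials (multisets over T).  *)
Definition tsym n : countType := ('I_n + (nmono n * nmono n))%type.

Local Open Scope mset_scope.

Definition QT n := {mset tsym n} -> rat.

Definition QT1 n : QT n := fun mu => ((mu == mset0)%:R)%R.
Arguments QT1 n : clear implicits.

Fixpoint subseqs (T : Type) (s : seq T) : seq (seq T) :=
  match s with
  | [::] => [:: [::]]
  | x :: s' => subseqs s' ++ [seq x :: l | l <- subseqs s']
  end.

Definition submsets (K : choiceType) (mu : {mset K}) : seq {mset K} :=
  undup [seq seq_mset l | l <- subseqs (enum_mset mu)].

Definition QTmul n (f g : QT n) : QT n := fun mu =>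
  (\sum_(nu <- submsets mu) f nu * g (mu `\` nu))%R.

Definition QTexpn n (f : QT n) (k : nat) : QT n := iter k (QTmul f) (QT1 n).

Fixpoint QTinv_aux n (f : QT n) (fuel : nat) (mu : {mset tsym n}) : rat :=
  match fuel with
  | 0 => if mu == mset0 then ((f mset0)^-1)%R else 0%R
  | k.+1 =>
      if mu == mset0 then ((f mset0)^-1)%R
      else (- (f mset0)^-1 *
            \sum_(nu <- submsets mu | nu != mset0)
               f nu * QTinv_aux f k (mu `\` nu))%R
  end.
Definition QTinv n (f : QT n) : QT n := fun mu => QTinv_aux f (size mu) mu.

Definition QTzpow n (f : QT n) (d : int) : QT n :=
  match d with
  | Posz k => QTexpn f k
  | Negz k => QTexpn (QTinv f) k.+1
  end.

(* exponential of a series without constant term: on a monomial with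
   k letters only the powers L^j, j <= k, contribute *)
Definition QTexp n (L : QT n) : QT n := fun mu =>
  (\sum_(j < (size mu).+1) QTexpn L j mu / (j`!)%:R)%R.

Definition tvar n (i : 'I_n) : QT n :=
  fun mu => ((mu == [mset (inl i : tsym n)])%:R)%R.

(* the linear map t : Q{X}^ (x) Q{X}^ -> span(T)^ (completed),
   t(m1 (x) m2) = t(m1,m2), t(m (x) 1) = t(1 (x) m) = t(1 (x) 1) = 0 *)
Definition tlin n (F : QXX n) : QT n := fun mu =>
  match enum_mset mu with
  | [:: inr (m1, m2)] => F (Some m1, Some m2)
  | _ => 0%R
  end.

Definition tstar n (g g' : QX n) : QT n := QTexp (tlin (tens g g')).

(* Main.v *)
Require Import Defs.
From mathcomp Require Import all_boot all_algebra.
From mathcomp Require Import finmap multiset ring.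
From Stdlib Require Import Classical FunctionalExtensionality.
Import GRing.Theory Num.Theory.
Local Open Scope ring_scope.
Local Open Scope mset_scope.

Lemma seq_mset0 (K : choiceType) : seq_mset [::] = (mset0 : {mset K}).
Proof. by apply/msetP => a; rewrite mset_seqE mset0E. Qed.

Lemma seq_mset1 (K : choiceType) (x : K) : seq_mset [:: x] = [mset x].
Proof. by apply/msetP => a; rewrite mset_seqE msetnE /= addn0 eq_sym; case: eqP. Qed.

Lemma mset0_neq1 (K : choiceType) (x : K) : (mset0 == [mset x]) = false.
Proof.
apply/negbTE/eqP => h; have := congr1 (fun A : {mset K} => A x) h.
by rewrite mset0E msetnxx.
Qed.

Lemma mset1_eq (K : choiceType) (x y : K) : ([mset x] == [mset y]) = (x == y).
Proof.
apply/eqP/eqP => [h|->] //; have := congr1 (fun A : {mset K} => A x) h.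
by rewrite msetnxx msetnE; case: eqP.
Qed.

Lemma submsets0 (K : choiceType) : submsets (mset0 : {mset K}) = [:: mset0].
Proof. by rewrite /submsets enum_mset0 /= seq_mset0. Qed.

Lemma submsets1 (K : choiceType) (x : K) :
  submsets [mset x] = [:: mset0; [mset x]].
Proof.
rewrite /submsets enum_msetn /= seq_mset0 seq_mset1 /= inE mset0_neq1 //.
Qed.

Lemma msetB0 (K : choiceType) (A : {mset K}) : A `\` mset0 = A.
Proof. by apply/msetP => a; rewrite msetE2 mset0E subn0. Qed.

Lemma msetBxx (K : choiceType) (A : {mset K}) : A `\` A = mset0.
Proof. by apply/msetP => a; rewrite msetE2 mset0E subnn. Qed.

Lemma size_mset0 (K : choiceType) : size (mset0 : {mset K}) = 0%N.
Proof. by rewrite enum_mset0. Qed.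

Lemma size_mset1 (K : choiceType) (x : K) : size [mset x] = 1%N.
Proof. by rewrite enum_msetn. Qed.


Lemma mul_c0 n (f g : QT n) : QTmul f g mset0 = f mset0 * g mset0.
Proof. by rewrite /QTmul submsets0 big_seq1 msetB0. Qed.

Lemma mul_c1 n (f g : QT n) x :
  QTmul f g [mset x] = f mset0 * g [mset x] + f [mset x] * g mset0.
Proof. by rewrite /QTmul submsets1 big_cons big_seq1 msetB0 msetBxx. Qed.

Lemma QT1_c0 n : QT1 n mset0 = 1.
Proof. by rewrite /QT1 eqxx. Qed.

Lemma QT1_c1 n x : QT1 n [mset x] = 0.
Proof. by rewrite /QT1 eq_sym mset0_neq1. Qed.

Lemma expn_c0 n (f : QT n) k : f mset0 = 1 -> QTexpn f k mset0 = 1.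
Proof.
move=> h; elim: k => [|k IH]; first exact: QT1_c0.
by rewrite /QTexpn iterS -/(QTexpn f k) mul_c0 IH h mulr1.
Qed.

Lemma expn_c1 n (f : QT n) k x : f mset0 = 1 ->
  QTexpn f k [mset x] = k%:R * f [mset x].
Proof.
move=> h; elim: k => [|k IH]; first by rewrite mul0r; exact: QT1_c1.
rewrite /QTexpn iterS -/(QTexpn f k) mul_c1 IH h expn_c0 // mulrSr.
by rewrite mul1r mulr1 mulrDl mul1r.
Qed.

Lemma inv_c0 n (f : QT n) : f mset0 = 1 -> QTinv f mset0 = 1.
Proof. by move=> h; rewrite /QTinv size_mset0 /= eqxx h invr1. Qed.

Lemma inv_c1 n (f : QT n) x : f mset0 = 1 -> QTinv f [mset x] = - f [mset x].
Proof.
move=> h; rewrite /QTinv size_mset1 /= eq_sym mset0_neq1 submsets1.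
rewrite big_cons eqxx /= big_cons big_nil eq_sym mset0_neq1 /= msetBxx eqxx.
by rewrite h invr1 addr0 mulr1 mulN1r.
Qed.

Lemma zpow_c0 n (f : QT n) d : f mset0 = 1 -> QTzpow f d mset0 = 1.
Proof.
move=> h; case: d => k; first exact: expn_c0.
by apply: expn_c0; exact: inv_c0.
Qed.

Lemma zpow_c1 n (f : QT n) d x : f mset0 = 1 ->
  QTzpow f d [mset x] = d%:~R * f [mset x].
Proof.
move=> h; case: d => k; first by rewrite /QTzpow expn_c1.
rewrite /QTzpow.
rewrite expn_c1 ?inv_c0 // inv_c1 // NegzE mulrN.
by rewrite mulrNz mulNr.
Qed.

Lemma exp_c0 n (L : QT n) : QTexp L mset0 = 1.
Proof.
rewrite /QTexp size_mset0 big_ord_recl big_ord0 addr0 /= QT1_c0.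
by rewrite invr1 mulr1.
Qed.

Lemma exp_c1 n (L : QT n) x : L mset0 = 0 -> QTexp L [mset x] = L [mset x].
Proof.
move=> h; rewrite /QTexp size_mset1 !big_ord_recl big_ord0 addr0 /=.
rewrite QT1_c1 mul0r add0r /QTexpn /= mul_c1 QT1_c1 QT1_c0 h mul0r add0r.
by rewrite mulr1 invr1 mulr1.
Qed.

Lemma tvar_c0 n (i : 'I_n) : tvar i mset0 = 0.
Proof. by rewrite /tvar mset0_neq1. Qed.

Lemma tvar_c1 n (i : 'I_n) x : tvar i [mset x] = (x == inl i)%:R.
Proof. by rewrite /tvar mset1_eq. Qed.

Lemma tlin_c0 n (F : QXX n) : tlin F mset0 = 0.
Proof. by rewrite /tlin enum_mset0. Qed.

Lemma tlin_inl n (F : QXX n) i : tlin F [mset (inl i : tsym n)] = 0.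
Proof. by rewrite /tlin enum_msetn. Qed.

Lemma tlin_inr n (F : QXX n) a b :
  tlin F [mset (inr (a, b) : tsym n)] = F (Some a, Some b).
Proof. by rewrite /tlin enum_msetn. Qed.

Lemma bigprod_c n k (F : 'I_k -> QT n) x : (forall i, F i mset0 = 1) ->
  (\big[@QTmul n/QT1 n]_(i < k) F i) mset0 = 1 /\
  (\big[@QTmul n/QT1 n]_(i < k) F i) [mset x] = \sum_(i < k) F i [mset x].
Proof.
move=> h.
apply: (big_rec2 (fun y1 y2 => y1 mset0 = 1 /\ y1 [mset x] = y2)).
  by rewrite QT1_c0 QT1_c1.
move=> i y1 y2 _ [h1 h2] /=; rewrite mul_c0 mul_c1 !h.
rewrite [y1 mset0]h1 [y1 [mset x]]h2 mul1r mulr1 mul1r addrC.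
by split.
Qed.

Lemma mdeg_gt0 n (a : nmono n) : (0 < mdeg a)%N.
Proof. by elim: a => //= a IHa b IHb; rewrite addn_gt0 IHa. Qed.

Lemma Delta_QX1 n u v : Delta (QX1 n) (u, v) = QX1 n u * QX1 n v.
Proof.
rewrite /Delta /=.
case: u => [a|]; case: v => [b|] /=.
- rewrite /omonos ifF; last by apply/negbTE; rewrite -lt0n ?addn0 ?add0n ?addn_gt0 mdeg_gt0.
  by rewrite big_map big1 ?mulr0 // => w _; rewrite mul0r.
- rewrite /omonos ifF; last by apply/negbTE; rewrite -lt0n ?addn0 ?add0n ?addn_gt0 mdeg_gt0.
  by rewrite big_map big1 ?mulr0 // => w _; rewrite mul0r.
- rewrite /omonos ifF; last by apply/negbTE; rewrite -lt0n ?addn0 ?add0n ?addn_gt0 mdeg_gt0.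
  by rewrite big_map big1 ?mul0r // => w _; rewrite mul0r.
- by rewrite /omonos /= big_seq1 mul1r.
Qed.

Lemma Delta_lin n m (a : 'I_m -> rat) (G : 'I_m -> QX n) (A : rat) uv :
  (forall w, \sum_(j < m) a j * G j w = A * QX1 n w) ->
  \sum_(j < m) a j * Delta (G j) uv = A * Delta (QX1 n) uv.
Proof.
move=> H; rewrite /Delta.
under eq_bigr do rewrite big_distrr /=.
rewrite exchange_big /= big_distrr /=; apply: eq_bigr => w _.
rewrite mulrA -H big_distrl /=; apply: eq_bigr => j _; by rewrite mulrA.
Qed.

Definition hh {n} (f : QX n) u : rat := f u - QX1 n u.

Lemma D2 n m (a : 'I_m -> rat) (G : 'I_m -> QX n) (k : 'I_m) :
  (forall j, grouplike (G j)) ->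
  (forall u, \sum_(j < m) a j * hh (G j) u = 0) ->
  forall u1 u2, \sum_(j < m) a j * (G j u1 - G k u1) * hh (G j) u2 = 0.
Proof.
move=> gl H.
set A := \sum_(j < m) a j.
have H' : forall u, \sum_(j < m) a j * G j u = A * QX1 n u.
  move=> u; apply/eqP; rewrite -subr_eq0; apply/eqP.
  rewrite -[RHS](H u) /A mulr_suml -sumrB.
  by apply: eq_bigr => j _; rewrite /hh mulrBr.
have D1 : forall u1 u2, \sum_(j < m) a j * G j u1 * G j u2
                       = A * QX1 n u1 * QX1 n u2.
  move=> u1 u2; rewrite -mulrA -Delta_QX1 -(@Delta_lin _ _ _ _ _ (u1, u2) H').
  by apply: eq_bigr => j _; rewrite -mulrA; case: (gl j) => _ ->.
move=> u1 u2.
have -> : \sum_(j < m) a j * (G j u1 - G k u1) * hh (G j) u2 =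
   \sum_(j < m) a j * G j u1 * G j u2 - QX1 n u2 * \sum_(j < m) a j * G j u1
   - G k u1 * \sum_(j < m) a j * G j u2 + G k u1 * QX1 n u2 * A.
  rewrite !mulr_sumr -!sumrB -big_split /=. apply: eq_big => // j _.
  rewrite /hh; ring.
rewrite D1 !H'; ring.
Qed.

Definition Rel {n m} (d : 'I_m -> rat) (G G' : 'I_m -> QX n) :=
  forall u v, \sum_(j < m) d j * hh (G j) u * hh (G' j) v = 0.

Lemma Rel_swap n m d (G G' : 'I_m -> QX n) : Rel d G G' -> Rel d G' G.
Proof.
by move=> H u v; rewrite -[RHS](H v u); apply: eq_bigr => j _; rewrite mulrAC.
Qed.

Lemma Rel_shift n m d (G G' : 'I_m -> QX n) k u1 :
  (forall j, grouplike (G j)) -> Rel d G G' ->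
  Rel (fun j => d j * (G j u1 - G k u1)) G G'.
Proof.
move=> gl H u v.
have Hv : forall w, \sum_(j < m) (d j * hh (G' j) v) * hh (G j) w = 0.
  by move=> w; rewrite -[RHS](H w v); apply: eq_bigr => j _; ring.
rewrite -[RHS](@D2 _ _ _ G k gl Hv u1 u); apply: eq_bigr => j _; ring.
Qed.

Lemma Tlem n m : forall (d : 'I_m -> rat) (G G' : 'I_m -> QX n),
  (forall j, grouplike (G j) /\ G j <> QX1 n) ->
  (forall j, grouplike (G' j) /\ G' j <> QX1 n) ->
  (forall j k, j != k -> (G j, G' j) <> (G k, G' k)) ->
  Rel d G G' -> forall j, d j = 0.
Proof.
elim: m => [|m IH] d G G' hG hG' hd H j; first by case: j.
have gl : forall j, grouplike (G j) by move=> i; case: (hG i).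
have gl' : forall j, grouplike (G' j) by move=> i; case: (hG' i).
have hdl : forall j1 k1 : 'I_m, j1 != k1 ->
    (G (lift ord0 j1), G' (lift ord0 j1)) <> (G (lift ord0 k1), G' (lift ord0 k1)).
  by move=> j1 k1 ne; apply: hd; rewrite (inj_eq (@lift_inj _ ord0)).
have Hl : forall i, d (lift ord0 i) = 0.
  move=> i.
  have A : forall u1, d (lift ord0 i) * (G (lift ord0 i) u1 - G ord0 u1) = 0.
    move=> u1.
    have R1 := @Rel_shift _ _ _ _ _ ord0 u1 gl H.
    have R2 : Rel (fun i => d (lift ord0 i) * (G (lift ord0 i) u1 - G ord0 u1))
                  (fun i => G (lift ord0 i)) (fun i => G' (lift ord0 i)).
      move=> u v; rewrite -[RHS](R1 u v) big_ord_recl /= subrr mulr0 !mul0r.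
      by rewrite add0r.
    apply: (IH _ _ _ _ _ hdl R2 i).
      by move=> i'; exact: hG.
    by move=> i'; exact: hG'.
  have B : forall u1, d (lift ord0 i) * (G' (lift ord0 i) u1 - G' ord0 u1) = 0.
    move=> u1.
    have R1 := @Rel_shift _ _ _ _ _ ord0 u1 gl' (@Rel_swap _ _ _ _ _ H).
    have R2 : Rel (fun i => d (lift ord0 i) * (G' (lift ord0 i) u1 - G' ord0 u1))
                  (fun i => G (lift ord0 i)) (fun i => G' (lift ord0 i)).
      apply: Rel_swap.
      move=> u v; rewrite -[RHS](R1 u v) big_ord_recl /= subrr mulr0 !mul0r.
      by rewrite add0r.
    apply: (IH _ _ _ _ _ hdl R2 i).
      by move=> i'; exact: hG.
    by move=> i'; exact: hG'.
  case: (d (lift ord0 i) =P 0) => // /eqP nz; exfalso.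
  have ne : lift ord0 i != ord0 by rewrite eq_sym neq_lift.
  apply: (hd _ _ ne); congr pair; apply: functional_extensionality => u.
    by move: (A u) => /eqP; rewrite mulf_eq0 (negbTE nz) subr_eq0 => /eqP.
  by move: (B u) => /eqP; rewrite mulf_eq0 (negbTE nz) subr_eq0 => /eqP.
have H0 : forall u v, d ord0 * hh (G ord0) u * hh (G' ord0) v = 0.
  move=> u v; rewrite -[RHS](H u v) big_ord_recl big1 ?addr0 // => i _.
  by rewrite Hl !mul0r.
case: (unliftP ord0 j) => [i ->|->]; first exact: Hl.
case: (d ord0 =P 0) => // /eqP nz; exfalso.
case: (hG ord0) => _; apply; apply: functional_extensionality => u.
apply: NNPP => ne.
case: (hG' ord0) => _; apply; apply: functional_extensionality => v.
have ne' : (G ord0 u == QX1 n u) = false by apply/negbTE/eqP.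
move: (H0 u v) => /eqP; rewrite !mulf_eq0 (negbTE nz) /= /hh !subr_eq0 ne'.
by move=> /eqP.
Qed.


Theorem lemma5p2 (n m : nat) (e : 'I_n -> int) (d : 'I_m -> int)
    (g g' : 'I_m -> QX n) :
  (forall j, grouplike (g j) /\ g j <> QX1 n) ->
  (forall j, grouplike (g' j) /\ g' j <> QX1 n) ->
  (forall j k : 'I_m, j != k -> (g j, g' j) <> (g k, g' k)) ->
  QTmul (\big[@QTmul n/QT1 n]_(i < n) QTzpow (QTexp (tvar i)) (e i))
        (\big[@QTmul n/QT1 n]_(j < m) QTzpow (tstar (g j) (g' j)) (d j))
    = QT1 n ->
  (forall i, e i = 0%R) /\ (forall j, d j = 0%R).
Proof.
move=> hg hg' hd hP.
set A := \big[@QTmul n/QT1 n]_(i < n) _ in hP.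
set B := \big[@QTmul n/QT1 n]_(j < m) _ in hP.
have cA : forall x : tsym n, A mset0 = 1 /\
    A [mset x] = (\sum_(i < n) (e i)%:~R * (x == inl i)%:R)%R.
  move=> x; have [h1 h2] := @bigprod_c n n
     (fun i => QTzpow (QTexp (tvar i)) (e i)) x (fun i => zpow_c0 _ _ _ (exp_c0 _ _)).
  split=> //; rewrite /A h2; apply: eq_bigr => i _.
  by rewrite zpow_c1 ?exp_c0 // exp_c1 ?tvar_c0 // tvar_c1.
have cB : forall x : tsym n, B mset0 = 1 /\
    B [mset x] = (\sum_(j < m) (d j)%:~R * tlin (tens (g j) (g' j)) [mset x])%R.
  move=> x; have [h1 h2] := @bigprod_c n m
     (fun j => QTzpow (tstar (g j) (g' j)) (d j)) x (fun j => zpow_c0 _ _ _ (exp_c0 _ _)).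
  split=> //; rewrite /B h2; apply: eq_bigr => j _.
  by rewrite /tstar zpow_c1 ?exp_c0 // exp_c1 ?tlin_c0.
have key : forall x : tsym n, (B [mset x] + A [mset x] = 0)%R.
  move=> x; have := congr1 (fun f => f [mset x]) hP.
  by rewrite /= mul_c1 QT1_c1 (cA x).1 (cB x).1 mul1r mulr1.
split.
  move=> i; apply/eqP; rewrite -(intr_eq0 rat) -[X in X == _]add0r.
  have := key (inl i); rewrite (cA _).2 (cB _).2.
  rewrite big1; last by move=> j _; rewrite tlin_inl mulr0.
  rewrite (bigD1 i) //= eqxx mulr1 big1 ?addr0 => [->|k nk] //.
  case: eqP => [[ik]|_]; last by rewrite mulr0.
  by rewrite ik eqxx in nk.
have R : Rel (fun j => (d j)%:~R) g g'.
  move=> [a|] [b|].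
  - have := key (inr (a, b)); rewrite (cA _).2 (cB _).2.
    rewrite [X in _ + X]big1 ?addr0; last by move=> i _; rewrite mulr0.
    move=> E; rewrite -[RHS]E; apply: eq_bigr => j _; rewrite tlin_inr /tens /hh /=.
    by rewrite !subr0 mulrA.
  - by rewrite big1 // => j _; rewrite /hh /= -/(counit (g' j)) (hg' j).1.1 subrr mulr0.
  - by rewrite big1 // => j _; rewrite /hh /= -/(counit (g j)) (hg j).1.1 subrr mulr0 mul0r.
  - by rewrite big1 // => j _; rewrite /hh /= -/(counit (g j)) (hg j).1.1 subrr mulr0 mul0r.
move=> j; apply/eqP; rewrite -(intr_eq0 rat); apply/eqP.
exact: (@Tlem _ _ _ _ _ hg hg' hd R j).
Qed.
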